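(* Let $X$ be a topological space, $x \in X$, and let $F$ be a strategy for player II in the game $\mathsf{G}_1(\Omega_x, \Omega_x)$. Then for every finite sequence $D_0, \dots, D_n$ of elements of $\Omega_x$ there is an open set $A$ with $x \in A$ such that for every $a \in A \setminus \{x\}$ there is $D_a \in \Omega_x$ with $F(D_0, \dots, D_n, D_a) = a$.
   Context: For a point $x$ of a space $X$, $\Omega_x$ denotes the collection of all sets $A \subset X$ such that $x \notin A$ and $x \in \overline{A}$. The game $\mathsf{G}_1(\Omega_x,\Omega_x)$ is played in innings $n \in \omega$: in inning $n$ player I chooses $A_n \in \Omega_x$ and then player II chooses $a_n \in A_n$; player II wins if $\{a_n : n \in \omega\} \in \Omega_x$. A strategy for player II is a function $F$ assigning to each finite nonempty sequence $(D_0,\dots,D_n)$ of elements of $\Omega_x$ a point $F(D_0,\dots,D_n) \in D_n$. *)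

(* Defs.v *)
From HB Require Import structures.
From mathcomp Require Import all_boot.
From mathcomp Require Import boolp classical_sets topology.
Set Implicit Arguments. Unset Strict Implicit. Unset Printing Implicit Defensive.
Local Open Scope classical_set_scope.

Definition Omega (X : topologicalType) (x : X) : set (set X) :=
  [set A | ~ A x /\ closure A x].

Definition Omega_seq (X : topologicalType) (x : X) (s : seq (set X)) : Prop :=
  forall i, (i < size s)%N -> Omega x (nth set0 s i).

(* A strategy for player II in G_1(Omega_x, Omega_x): to every finite nonempty
   sequence (D_0, ..., D_n) of elements of Omega_x it assigns a point of D_n.
   Its values on other sequences are irrelevant. *)
Definition strategyII (X : topologicalType) (x : X) (F : seq (set X) -> X) : Prop :=
  forall s : seq (set X), s <> [::] -> Omega_seq x s -> last set0 s (F s).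

(* Main.v *)
Require Import Defs.
From mathcomp Require Import all_boot.
From mathcomp Require Import boolp classical_sets topology.
Local Open Scope classical_set_scope.

Theorem lemma2p3 (X : topologicalType) (x : X) (F : seq (set X) -> X) :
  strategyII x F ->
  forall s : seq (set X), s <> [::] -> Omega_seq x s ->
  exists A : set X, open A /\ A x /\
    forall a : X, A a -> a <> x ->
      exists Da : set X, Omega x Da /\ F (rcons s Da) = a.
Proof.
move=> HF s sn0 Hs.
pose B := [set a | a <> x /\ forall D, Omega x D -> F (rcons s D) <> a].
have nB : ~ Omega x B.
  move=> OB.
  have h := HF (rcons s B).
  have : last set0 (rcons s B) (F (rcons s B)).
    apply: h; first by case: (s).
    move=> i; rewrite size_rcons ltnS leq_eqVlt => /orP [/eqP ->|lt].
      by rewrite nth_rcons ltnn eqxx.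
    by rewrite nth_rcons lt; apply: Hs.
  by rewrite last_rcons => -[_ /(_ B OB)].
have xB : ~ B x by move=> [].
have ncl : ~ closure B x by move=> cl; apply: nB; split.
have [N [NN HN]] : exists N, nbhs x N /\ ~ (B `&` N !=set0).
  apply: contrapT => hn; apply: ncl => N NN.
  apply: contrapT => hh; apply: hn; by exists N.
exists (interior N); split; first exact: open_interior.
split; first exact: nbhs_singleton (nbhs_interior NN).
move=> a Aa ax.
apply: contrapT => hn; apply: HN; exists a; split; last exact: interior_subset.
split=> // D OD FD; apply: hn; by exists D.
Qed.
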